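(* Let $P_1,P_2$ be probability measures on $(\Omega,\mathcal A)$, let $\delta_1,\delta_2\in(\tfrac12,1)$, and let $\bar{\mathbf C}\subseteq\bar{\mathcal A}$ be a C-class. If $\bar T(P_1,\delta_1)\cup\bar T(P_2,\delta_2)\subseteq\bar{\mathbf C}$, then $P_1=P_2$.
   Context: Let $(\Omega,\mathcal A)$ be a measurable space. For $n\ge1$, $\mathcal A^n$ is the product $\sigma$-algebra on $\Omega^n$; the extended event space is $\bar{\mathcal A}=\bigcup_{n\ge1}\mathcal A^n$, events tagged by their level $n$. For a probability measure $P$ on $\mathcal A$, $P^n$ is its $n$-fold product, $\bar P(A^{(n)})=P^n(A^{(n)})$ for $A^{(n)}\in\mathcal A^n$, and $\bar T(P,\delta)=\{A\in\bar{\mathcal A}:\bar P(A)\ge\delta\}$. A class $\bar{\mathbf C}\subseteq\bar{\mathcal A}$ is a C-class if for every $n\ge1$ the component $\mathcal C^{(n)}=\bar{\mathbf C}\cap\mathcal A^n$ satisfies: $\Omega^n\in\mathcal C^{(n)}$; if $A\in\mathcal C^{(n)}$, $B\in\mathcal A^n$, $A\subseteq B$ then $B\in\mathcal C^{(n)}$; $\mathcal C^{(n)}$ contains no two disjoint events. *)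

(* Defs.v *)
From HB Require Import structures.
From mathcomp Require Import all_boot all_order all_algebra.
From mathcomp Require Import all_classical all_reals all_analysis.
Set Implicit Arguments. Unset Strict Implicit. Unset Printing Implicit Defensive.
Import Order.TTheory GRing.Theory Num.Theory.
Local Open Scope classical_set_scope.
Local Open Scope ring_scope.
Local Open Scope ereal_scope.

(* Omega^n is modelled as [n.-tuple T], which MathComp-Analysis equips with
   the product sigma-algebra (generated by the coordinate projections). *)

(* n-fold product measure P^n, defined by iterated integration of sections:
   P^0 = Dirac at the empty tuple,
   P^(n+1)(A) = \int P(dx) P^n {t | x :: t \in A}. *)
Fixpoint pow_measure d (T : measurableType d) (R : realType)
    (P : probability T R) (n : nat) : set (n.-tuple T) -> \bar R :=
  match n return set (n.-tuple T) -> \bar R with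
  | 0%N => fun A => if `[< A [tuple] >] then 1 else 0
  | n'.+1 => fun A =>
      \int[P]_(x in [set: T])
        pow_measure P [set t : n'.-tuple T | A [tuple of x :: t]]
  end.

Definition C_class d (T : measurableType d)
    (C : forall n : nat, set (set (n.-tuple T))) : Prop :=
  forall n : nat, (1 <= n)%N ->
    (forall A, C n A -> measurable A) /\
    C n [set: n.-tuple T] /\
    (forall A B : set (n.-tuple T), C n A -> measurable B -> A `<=` B -> C n B) /\
    (forall A B : set (n.-tuple T), C n A -> C n B -> A `&` B !=set0).

Definition Tbar_sub d (T : measurableType d) (R : realType)
    (P : probability T R) (delta : R)
    (C : forall n : nat, set (set (n.-tuple T))) : Prop :=
  forall n : nat, (1 <= n)%N -> forall A : set (n.-tuple T),
    measurable A -> (delta%:E <= pow_measure P A) -> C n A.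

(* Main.v *)
Require Import Defs.
From HB Require Import structures.
From mathcomp Require Import all_boot all_order all_algebra.
From mathcomp Require Import all_classical all_reals all_analysis.
From mathcomp Require Import ring lra measurable_realfun.
Import Order.TTheory GRing.Theory Num.Theory.
Local Open Scope classical_set_scope.
Local Open Scope ring_scope.

Fixpoint Lop (R : realType) (p : R) (n : nat) (f : R -> R) : R :=
  match n with
  | 0%N => f 0
  | n'.+1 => p * Lop R p n' (fun r => f (1 + r)) + (1 - p) * Lop R p n' f
  end.
Arguments Lop {R}.

Lemma Lop_lin (R : realType) (p : R) n : forall (f g : R -> R) (a b : R),
  Lop p n (fun r => a * f r + b * g r) = a * Lop p n f + b * Lop p n g.
Proof.
elim: n => [//|n IH] f g a b /=.
rewrite (IH (fun r => f (1 + r)) (fun r => g (1 + r))) IH; ring.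
Qed.

Lemma Lop_cst (R : realType) (p : R) n : forall c, Lop p n (fun _ => c) = c.
Proof. elim: n => [//|n IH] c /=; rewrite !IH; ring. Qed.

Lemma Lop_ext (R : realType) (p : R) n : forall (f g : R -> R),
  f =1 g -> Lop p n f = Lop p n g.
Proof. by move=> f g /funext ->. Qed.

Lemma Lop_mono (R : realType) (p : R) n : 0 <= p <= 1 -> forall (f g : R -> R),
  (forall r, f r <= g r) -> Lop p n f <= Lop p n g.
Proof.
move=> /andP[p0 p1]; elim: n => [|n IH] f g fg /=; first exact: fg.
apply: lerD; apply: ler_wpM2l; rewrite ?subr_ge0 //; apply: IH => r; exact: fg.
Qed.

Lemma Lop_sq (R : realType) (p : R) n : forall c,
  Lop p n (fun r => (r + c) ^+ 2) = (n%:R * p + c) ^+ 2 + n%:R * p * (1 - p).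
Proof.
elim: n => [|n IH] c /=; first by rewrite mul0r add0r mul0r addr0.
rewrite (@Lop_ext _ _ _ _ (fun r => (r + (1 + c)) ^+ 2)); last by move=> r; congr (_ ^+ 2); ring.
rewrite !IH -[n.+1]addn1 natrD; ring.
Qed.

Lemma indic_le (R : realType) (S1 S2 : set R) r : (S1 r -> S2 r) -> \1_S1 r <= \1_S2 r :> R.
Proof.
rewrite /indic; case: (boolP (r \in S1)) => [/set_mem H|_] h.
  by rewrite mem_set ?lexx //; exact: h.
by case: (r \in S2).
Qed.

Lemma indic_compl (R : realType) (c r : R) :
  \1_[set r | r <= c] r + \1_[set r | c < r] r = 1 :> R.
Proof.
rewrite /indic; case: (lerP r c) => h.
  rewrite (mem_set (h : [set r | r <= c] r)) memNset ?addr0 //= => h2.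
  by move: h; rewrite leNgt h2.
rewrite (mem_set (h : [set r | c < r] r)) memNset ?add0r //= => h2.
by move: h; rewrite ltNge h2.
Qed.

Lemma Lop_cheb (R : realType) (p eps : R) n (F : set R) :
  0 <= p <= 1 -> 0 < eps -> (0 < n)%N ->
  (forall r, F r -> n%:R * eps <= r - n%:R * p \/ n%:R * eps <= n%:R * p - r) ->
  Lop p n \1_F <= (n%:R * eps ^+ 2)^-1.
Proof.
move=> hp he hn hF.
have n0 : 0 < n%:R :> R by rewrite ltr0n.
have ne0 : 0 < n%:R * eps :> R by rewrite mulr_gt0.
apply: (le_trans (@Lop_mono R p n hp _
   (fun r => ((n%:R * eps) ^+ 2)^-1 * (r + - (n%:R * p)) ^+ 2) _)).
  move=> r; rewrite /indic; case: (boolP (r \in F)) => [/set_mem H|_]; last first.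
    by rewrite mulr_ge0 // ?invr_ge0 ?sqr_ge0.
  rewrite /= ler_pdivlMl ?exprn_gt0 // mulr1.
  case: (hF r H) => h; nra.
have -> : Lop p n (fun r => ((n%:R * eps) ^+ 2)^-1 * (r + - (n%:R * p)) ^+ 2)
   = ((n%:R * eps) ^+ 2)^-1 * Lop p n (fun r => (r + - (n%:R * p)) ^+ 2).
  have := @Lop_lin R p n (fun r => (r + - (n%:R * p)) ^+ 2) (fun r => (r + - (n%:R * p)) ^+ 2)
            ((n%:R * eps) ^+ 2)^-1 0.
  rewrite mul0r addr0 => <-; apply: Lop_ext => r; by rewrite mul0r addr0.
rewrite Lop_sq subrr expr0n /= add0r.
case/andP: hp => p0 p1.
have -> : (n%:R * eps) ^- 2 * (n%:R * p * (1 - p)) = (n%:R * eps ^+ 2)^-1 * (p * (1 - p)).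
  by field; rewrite ?gt_eqF.
apply: ler_piMr; first by rewrite invr_ge0 mulr_ge0 ?sqr_ge0 ?ltW.
nra.
Qed.

Lemma Lop_split (R : realType) (p c : R) n :
  Lop p n \1_[set r | r <= c] = 1 - Lop p n \1_[set r | c < r].
Proof.
have := @Lop_lin R p n \1_[set r | r <= c] \1_[set r | c < r] 1 1.
rewrite !mul1r (@Lop_ext R p n _ (fun _ => 1)); last first.
  by move=> r; rewrite !mul1r indic_compl.
rewrite Lop_cst => ->; ring.
Qed.

Lemma sep_real (R : realType) (p1 p2 d1 d2 : R) :
  0 <= p1 <= 1 -> 0 <= p2 <= 1 -> p1 < p2 -> d1 < 1 -> d2 < 1 ->
  exists n c, (0 < n)%N /\ d1 <= Lop p1 n \1_[set r | r <= c]
     /\ d2 <= Lop p2 n \1_[set r | c < r].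
Proof.
move=> hp1 hp2 lt12 hd1 hd2.
pose eps := (p2 - p1) / 2.
have e0 : 0 < eps by rewrite /eps divr_gt0 // subr_gt0.
pose K := ((eps ^+ 2) * (1 - d1))^-1 + ((eps ^+ 2) * (1 - d2))^-1.
pose n := (Num.trunc K).+1.
have hn : K < n%:R by apply: truncnS_gt.
have k1 : 0 < ((eps ^+ 2) * (1 - d1))^-1 by rewrite invr_gt0 mulr_gt0 ?exprn_gt0 ?subr_gt0.
have k2 : 0 < ((eps ^+ 2) * (1 - d2))^-1 by rewrite invr_gt0 mulr_gt0 ?exprn_gt0 ?subr_gt0.
have n0 : (0 < n)%N by [].
have nR0 : 0 < n%:R :> R by rewrite ltr0n.
have bnd d : d < 1 -> ((eps ^+ 2) * (1 - d))^-1 < n%:R -> (n%:R * eps ^+ 2)^-1 <= 1 - d.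
  move=> hd h; have ee : 0 < eps ^+ 2 by rewrite exprn_gt0.
  have x0 : 0 < eps ^+ 2 * (1 - d) by rewrite mulr_gt0 ?subr_gt0.
  move: h; rewrite -[X in X < _]mul1r ltr_pdivrMr // => h.
  rewrite -[X in X <= _]mul1r ler_pdivrMr ?mulr_gt0 //; nra.
exists n, (n%:R * ((p1 + p2) / 2)); split => //; split.
- rewrite Lop_split lerBrDl addrC -lerBrDl.
  apply: le_trans (bnd d1 hd1 _); last by apply: le_lt_trans hn; rewrite /K lerDl ltW.
  apply: (le_trans _ (@Lop_cheb R p1 eps n [set r | n%:R * ((p1 + p2) / 2) < r] hp1 e0 n0 _)).
    by apply: Lop_mono => // r; apply: indic_le.
  move=> r /= h; left; rewrite /eps; nra.
- have : Lop p2 n \1_[set r | r <= n%:R * ((p1 + p2) / 2)] <= 1 - d2.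
    apply: le_trans (bnd d2 hd2 _); last by apply: le_lt_trans hn; rewrite /K lerDr ltW.
    apply: (le_trans _ (@Lop_cheb R p2 eps n [set r | r <= n%:R * ((p1 + p2) / 2)] hp2 e0 n0 _)).
      by apply: Lop_mono => // r; apply: indic_le.
    move=> r /= h; right; rewrite /eps; nra.
  rewrite Lop_split; lra.
Qed.

Definition cntR (R : realType) d (T : measurableType d) (A : set T) (t : seq T) : R :=
  \sum_(x <- t) \1_A x.
Arguments cntR R {d T}.

Lemma probfin {d} {T : measurableType d} {R : realType} (P : probability T R) (A : set T) :
  measurable A -> P A = (fine (P A))%:E /\ 0 <= fine (P A) <= 1.
Proof.
move=> mA.
have h0 : (0 <= P A)%E by apply: measure_ge0.
have h1 : (P A <= 1)%E by apply: probability_le1.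
have fA : P A \is a fin_num by rewrite ge0_fin_numE // (le_lt_trans h1) // ltey.
split; first by rewrite fineK.
by apply/andP; split; rewrite -lee_fin fineK.
Qed.

Lemma pow_cnt d (T : measurableType d) (R : realType) (P : probability T R)
  (A : set T) (mA : measurable A) n : forall S : set R,
  pow_measure P [set t : n.-tuple T | S (cntR R A t)] = (Lop (fine (P A)) n \1_S)%:E.
Proof.
have [PA /andP[p0 p1]] := @probfin _ _ _ P A mA.
have hp : 0 <= fine (P A) <= 1 by rewrite p0 p1.
elim: n => [|n IH] S /=.
  rewrite /cntR big_nil /indic.
  case: (pselect (S 0)) => h.
    by rewrite asboolT // mem_set.
  by rewrite asboolF // memNset.
pose a := Lop (fine (P A)) n \1_[set r | S (1 + r)].
pose b := Lop (fine (P A)) n \1_S.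
have a0 : 0 <= a by rewrite /a -(@Lop_cst R (fine (P A)) n 0); apply: Lop_mono => // r; rewrite /indic.
have b0 : 0 <= b by rewrite /b -(@Lop_cst R (fine (P A)) n 0); apply: Lop_mono => // r; rewrite /indic.
transitivity (\int[P]_(x in [set: T]) ((a * \1_A x)%:E + (b * \1_(~` A) x)%:E))%E.
  apply: eq_integral => x _.
  rewrite (_ : [set t : n.-tuple T | S (cntR R A [tuple of x :: t])]
     = [set t : n.-tuple T | [set r | S (\1_A x + r)] (cntR R A t)]); last first.
    by apply/seteqP; split => t /=; rewrite /cntR big_cons.
  rewrite IH; case: (pselect (A x)) => h.
    rewrite indicE mem_set // indicE memNset /=; last by move=> /(_ h).
    by rewrite mulr1 mulr0 addr0.
  rewrite indicE memNset // indicE mem_set //= mulr0 mulr1 add0r.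
  congr (_%:E); rewrite /b; congr Lop; apply/funext => r.
  by rewrite (_ : [set r0 | S (0 + r0)] = S) //; apply/funext => r0 /=; rewrite add0r.
rewrite (@ge0_integralD _ _ _ P setT measurableT (fun x => (a * \1_A x)%:E) (fun x => (b * \1_(~` A) x)%:E)) //; last 4 first.
- by move=> x _; rewrite lee_fin mulr_ge0.
- by apply/measurable_EFinP; apply: measurable_funM => //; apply: measurable_indic.
- by move=> x _; rewrite lee_fin mulr_ge0.
- by apply/measurable_EFinP; apply: measurable_funM => //; apply: measurable_indic; apply: measurableC.
rewrite (@integralZl_indic _ _ _ _ _ measurableT (fun _ => A)) //; last by move=> /lt_geF; rewrite a0.
rewrite (@integralZl_indic _ _ _ _ _ measurableT (fun _ => ~` A)) //; last 2 first.
  by move=> /lt_geF; rewrite b0.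
  exact: measurableC.
rewrite !integral_indic //; last exact: measurableC.
have -> : (P : {measure set T -> \bar R}) (~` A `&` setT) = (1 - fine (P A))%:E.
  rewrite setIT EFinB -PA; exact: (probability_setC P mA).
have -> : (P : {measure set T -> \bar R}) (A `&` setT) = (fine (P A))%:E by rewrite setIT.
rewrite -!EFinM -EFinD; congr (_%:E).
rewrite /a mulrC [b * _]mulrC; congr (_ * _ + _); congr Lop; apply/funext => r.
Qed.

Lemma meas_cnt d (T : measurableType d) (R : realType) (A : set T) (mA : measurable A) n :
  measurable_fun [set: n.-tuple T] (fun t : n.-tuple T => cntR R A t).
Proof.
elim: n => [|n IH].
  rewrite (_ : (fun t : 0.-tuple T => cntR R A t) = fun _ => 0); first exact: measurable_cst.
  by apply/funext => t; rewrite (tuple0 t) /cntR big_nil.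
rewrite (_ : (fun t : n.+1.-tuple T => cntR R A t) =
   (fun t => \1_A (tnth t ord0) + (fun u : n.-tuple T => cntR R A u) [tuple of behead t])).
  apply: measurable_funD.
    have mi : measurable_fun [set: T] (\1_A : T -> R) by apply/measurable_indicP. apply: (measurableT_comp mi); exact: measurable_tnth.
  exact: (measurableT_comp IH (@measurable_behead _ T n)).
apply/funext => t; rewrite [in LHS](tuple_eta t) /cntR /= big_cons.
by rewrite /thead.
Qed.

Lemma main_lt d (T : measurableType d) (R : realType)
    (P1 P2 : probability T R) (delta1 delta2 : R)
    (C : forall n : nat, set (set (n.-tuple T))) :
  delta1 < 1 -> delta2 < 1 ->
  C_class C ->
  Tbar_sub P1 delta1 C -> Tbar_sub P2 delta2 C ->
  forall A : set T, measurable A -> fine (P1 A) < fine (P2 A) -> False.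
Proof.
move=> hd1 hd2 hC hT1 hT2 A mA lt12.
have [_ hp1] := @probfin _ _ _ P1 A mA.
have [_ hp2] := @probfin _ _ _ P2 A mA.
have [n [c [n0 [h1 h2]]]] := @sep_real R _ _ _ _ hp1 hp2 lt12 hd1 hd2.
pose E := [set t : n.-tuple T | [set r | r <= c] (cntR R A t)].
pose Ec := [set t : n.-tuple T | [set r | c < r] (cntR R A t)].
have mE : measurable E.
  have := measurable_fun_le measurableT (@meas_cnt _ _ R A mA n) (measurable_cst c).
  by rewrite setTI.
have mEc : measurable Ec.
  rewrite (_ : Ec = ~` E); first exact: measurableC.
  apply/seteqP; split => t; rewrite /Ec /E /=.
  - by move=> k1 k2; move: (le_lt_trans k2 k1); rewrite ltxx.
  - by move=> h; rewrite ltNge; apply/negP.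
have CE : C n E by apply: hT1 => //; rewrite /E pow_cnt // lee_fin.
have CEc : C n Ec by apply: hT2 => //; rewrite /Ec pow_cnt // lee_fin.
have [_ [_ [_ hI]]] := hC n n0.
have [t [/= ht1 ht2]] := hI E Ec CE CEc.
by move: (le_lt_trans ht1 ht2); rewrite ltxx.
Qed.

Theorem mainTheorem6 (d : measure_display) (T : measurableType d) (R : realType)
    (P1 P2 : probability T R) (delta1 delta2 : R)
    (C : forall n : nat, set (set (n.-tuple T))) :
  2^-1 < delta1 < 1 -> 2^-1 < delta2 < 1 ->
  C_class C ->
  Tbar_sub P1 delta1 C -> Tbar_sub P2 delta2 C ->
  forall A : set T, measurable A -> P1 A = P2 A.
Proof.
move=> /andP[_ hd1] /andP[_ hd2] hC hT1 hT2 A mA.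
have [e1 _] := @probfin _ _ _ P1 A mA.
have [e2 _] := @probfin _ _ _ P2 A mA.
case: (ltgtP (fine (P1 A)) (fine (P2 A))) => h.
- exfalso; exact: (@main_lt d T R P1 P2 delta1 delta2 C hd1 hd2 hC hT1 hT2 A mA h).
- exfalso; exact: (@main_lt d T R P2 P1 delta2 delta1 C hd2 hd1 hC hT2 hT1 A mA h).
- rewrite e1 e2; congr (_%:E); exact: h.
Qed.
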